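(* Consider the lattice Boltzmann scheme described in the context, under acoustic scaling ($\lambda>0$ fixed as $\Delta x\to 0$, with $M$, $S$, $\epsilon$ independent of $\Delta x$), and a local initialisation $w\in\mathbb{R}^{q}$. Then for every $n\in\mathbb{N}^*$ the modified equation of the $n$-th starting scheme is, for $x\in\mathbb{R}^{d}$, \begin{align*} \phi(0,x) &+ n\frac{\Delta x}{\lambda}\partial_t\phi(0,x) + O(\Delta x^2)\\ &= w_1\phi(0,x) - n\Delta x\Big(\mathcal{G}_{11}w_1 + \sum_{r=2}^{q}\mathcal{G}_{1r}w_r + \frac{1}{n}\sum_{r=2}^{q}\mathcal{G}_{1r}(\epsilon_r w_1 - w_r)\sum_{\ell=0}^{n-1}\pi_{n-\ell}(s_r)\Big)\phi(0,x) + O(\Delta x^2), \end{align*} where $\pi_\ell(X)=1-(1-X)^\ell$ for $\ell\in\mathbb{N}$. In particular, for every smooth $\phi$, $((E^n w)_1\phi(0,\cdot))(x)$ admits the expansion given by the right-hand side.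
   Context: Fix $d\ge 1$, $q\ge 1$, discrete velocities $c_1,\dots,c_q\in\mathbb{Z}^d$, an invertible moment matrix $M\in GL_q(\mathbb{R})$, a relaxation matrix $S=\mathrm{diag}(s_1,\dots,s_q)$ with $s_i\in(0,2]$ for $i\in\{2,\dots,q\}$ and $s_1\in\mathbb{R}$, and equilibrium coefficients $\epsilon\in\mathbb{R}^q$ with $\epsilon_1=1$. The collision matrix is $K=I-S(I-\epsilon e_1^T)$, with $e_1$ the first canonical vector. Let $\Delta x>0$ be the space step, $\lambda>0$ the lattice velocity and $\Delta t=\Delta x/\lambda$. For $\ell=1,\dots,d$ the shift operator $x_\ell$ acts on functions of $x\in\mathbb{R}^d$ by $(x_\ell\phi)(x)=\phi(x-\Delta x\, e_\ell)$, and for $c\in\mathbb{Z}^d$, $x^{c}=x_1^{c_1}\cdots x_d^{c_d}$. The transport matrix is $T=M\,\mathrm{diag}(x^{c_1},\dots,x^{c_q})M^{-1}$ and the evolution matrix is $E=TK$ (entries are Laurent polynomials in the shifts). The time shift is $(z\phi)(t)=\phi(t+\Delta t)$. The lattice Boltzmann scheme updates the vector of moments by $m(t+\Delta t,\cdot)=E\,m(t,\cdot)$; $m_1$ is the conserved moment. The matrix of first-order differential operators is $\mathcal{G}=M\,\mathrm{diag}(c_1\cdot\nabla_x,\dots,c_q\cdot\nabla_x)M^{-1}$ with entries $\mathcal{G}_{ij}$. Given the lattice discretisation $m_1^\circ$ of an initial datum, the initialisation is $m(0,x)=w\,m_1^\circ(x)$; it is local if $w\in\mathbb{R}^q$. The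 $n$-th starting scheme ($n\in\mathbb{N}^*$) is $m_1(n\Delta t,x)=(E^n w)_1 m_1^\circ(x)$. Its modified equation is obtained by replacing the discrete unknowns by a smooth function $\phi(t,x)$, so that the scheme reads $(z^n\phi)(0,x)=((E^nw)_1\phi(0,\cdot))(x)$, and Taylor-expanding both sides in powers of $\Delta x$ as $\Delta x\to 0$. *)

(* Defs.v *)
From HB Require Import structures.
From mathcomp Require Import all_boot all_order all_algebra.
From mathcomp Require Import all_classical all_reals all_analysis.
Set Implicit Arguments. Unset Strict Implicit. Unset Printing Implicit Defensive.
Import Order.TTheory GRing.Theory Num.Theory.
Import numFieldNormedType.Exports.
Local Open Scope ring_scope.

Section LBM.
Variable R : realType.

Fixpoint iter_dir {V : normedModType R} (vs : seq V) (f : V -> R) : V -> R :=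
  match vs with
  | [::] => f
  | v :: vs' => fun x => derive (iter_dir vs' f) x v
  end.

Definition smooth {V : normedModType R} (f : V -> R) : Prop :=
  forall vs : seq V,
    continuous (iter_dir vs f) /\ (forall (x v : V), derivable (iter_dir vs f) x v).

Variables (d q : nat).
Definition vel (c : 'I_q -> 'rV[int]_d) (k : 'I_q) : 'rV[R]_d :=
  map_mx (fun z : int => z%:~R) (c k).

(* collision matrix K = I - S (I - eps e_1^T), S = diag(s) ;
   index 1 of the paper is ord0 here *)
Definition collision (s eps : 'I_q -> R) : 'M[R]_q :=
  \matrix_(i, j) ((i == j)%:R - s i * ((i == j)%:R - eps i * ((j : nat) == 0%N)%:R)).

(* action of the transport matrix T = M diag(x^{c_1},...,x^{c_q}) M^{-1}
   on a vector of functions; (x^c f)(x) = f(x - dx c) *)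
Definition transport_act (dx : R) (c : 'I_q -> 'rV[int]_d) (M : 'M[R]_q)
  (m : 'I_q -> 'rV[R]_d -> R) : 'I_q -> 'rV[R]_d -> R :=
  fun i x => \sum_(k < q) M i k *
     \sum_(j < q) invmx M k j * m j (x - dx *: vel c k).

Definition matrix_act (A : 'M[R]_q) (m : 'I_q -> 'rV[R]_d -> R) :
  'I_q -> 'rV[R]_d -> R := fun i x => \sum_(j < q) A i j * m j x.

Definition evolution_act dx c M (s eps : 'I_q -> R) m :=
  transport_act dx c M (matrix_act (collision s eps) m).

Definition En_w_act dx c M s eps (n : nat) (w : 'I_q -> R)
  (phi : 'rV[R]_d -> R) : 'I_q -> 'rV[R]_d -> R :=
  iter n (evolution_act dx c M s eps) (fun j x => w j * phi x).

Definition Gop (c : 'I_q -> 'rV[int]_d) (M : 'M[R]_q) (i j : 'I_q)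
  (phi : 'rV[R]_d -> R) (x : 'rV[R]_d) : R :=
  \sum_(k < q) M i k * invmx M k j * derive phi x (vel c k).

End LBM.

Definition pipoly {R : ringType} (l : nat) (X : R) : R := 1 - (1 - X) ^+ l.

(* Main.v *)
Require Import Defs.
From HB Require Import structures.
From mathcomp Require Import all_boot all_order all_algebra.
From mathcomp Require Import all_classical all_reals all_analysis.
Import Order.TTheory GRing.Theory Num.Theory.
Import numFieldNormedType.Exports.
From mathcomp Require Import ring lra.
Local Open Scope ring_scope.

Section H.
Variable R : realType.

Lemma near0_ex (P : R -> Prop) : (\forall h \near (0:R), P h) ->
  exists2 δ : R, 0 < δ & forall h, `|h| < δ -> P h.
Proof.
move=> /nbhs_ballP [δ δ0 H]; exists δ => // h hd; apply: H.
by rewrite /ball /= sub0r normrN.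
Qed.

Lemma deriv_eps (V : normedModType R) (F : V -> R) a v : derivable F a v ->
  forall e : R, 0 < e -> exists2 δ : R, 0 < δ & forall h : R, `|h| < δ ->
  `|F (a + h *: v) - F a - h * 'D_v F a| <= e * `|h|.
Proof.
move=> df e e0.
have L := df; move/cvgrPdist_lt : L => /(_ e e0).
rewrite near_withinE => /near0_ex [δ δ0 H].
exists δ => // h hd.
have [->|hn0] := eqVneq h 0.
  by rewrite scale0r addr0 subrr mul0r subrr !normr0 mulr0.
have := H h hd hn0; rewrite /= => Hh.
rewrite [h *: v + a]addrC in Hh.
move: Hh; set X := F (a + h *: v); set D := 'D_v F a; set Y := F a => Hh.
have -> : X - Y - h * D = - h * (D - h^-1 *: (X - Y)).
  rewrite -[h^-1 *: _]/(h^-1 * _); field; exact hn0.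
by rewrite normrM normrN mulrC ler_pM2r ?normr_gt0 // ltW.
Qed.

Lemma nearV_ex (V : normedModType R) (x : V) (P : V -> Prop) :
  (\forall y \near x, P y) ->
  exists2 δ : R, 0 < δ & forall y, `|x - y| < δ -> P y.
Proof.
move=> /nbhs_ballP [δ δ0 H]; exists δ => // y hd; apply: H.
by rewrite -ball_normE /ball_ /=.
Qed.

Lemma line_derive (V : normedModType R) (F : V -> R) z b t :
  derivable F (z + t *: b) b ->
  is_derive t 1 (fun u : R => F (z + u *: b)) ('D_b F (z + t *: b)).
Proof.
move=> df.
have E : (fun h : R => h^-1 *: (((fun u : R => F (z + u *: b)) \o shift t) (h *: 1)
            - F (z + t *: b))) =
         (fun h : R => h^-1 *: ((F \o shift (z + t *: b)) (h *: b) - F (z + t *: b))).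
  apply/funext => h /=; congr (_ *: (F _ - _)).
  rewrite -[h *: 1]/(h * 1) mulr1 scalerDl addrCA //.
split; first by rewrite /derivable E.
by rewrite /derive E.
Qed.

Lemma taylor1 (g : R -> R) : (forall t, derivable g t 1) ->
  derivable (fun t => 'D_1 g t) 0 1 ->
  exists C δ : R, 0 < δ /\ forall h, 0 < h < δ ->
    `|g h - g 0 - h * 'D_1 g 0| <= C * h ^+ 2.
Proof.
move=> dg dg2.
have [δ δ0 H] := @deriv_eps _ _ _ _ dg2 1 ltr01.
exists (`|'D_1 (fun t => 'D_1 g t) 0| + 1), δ; split => // h /andP[h0 hd].
have cont : {within `[0, h], continuous g}%classic.
  by apply: derivable_within_continuous => x _; apply: dg.
have [c cI E] := @MVT_segment R g (fun t => 'D_1 g t) 0 h (ltW h0)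
   (fun x _ => derivableP (dg x)) cont.
have c0 : 0 <= c by rewrite (itvP cI).
have ch : c <= h by rewrite (itvP cI).
have cd : `|c| < δ by rewrite ger0_norm //; apply: le_lt_trans ch hd.
have := H c cd; rewrite add0r -[c%:A]/(c * 1) mulr1 mul1r (ger0_norm c0).
move: E; rewrite subr0 => E.
have -> : g h - g 0 - h * 'D_1 g 0 = ('D_1 g c - 'D_1 g 0) * h.
  by rewrite mulrBl -E; ring.
set D2 := 'D_1 (fun t => 'D_1 g t) 0.
set X := 'D_1 g c - 'D_1 g 0.
move=> Hc; have /andP[Hl Hr] : - c <= X - c * D2 <= c by rewrite -ler_norml.
have [a1 a2] : D2 <= `|D2| /\ - `|D2| <= D2.
  by split; [apply: ler_norm | rewrite lerNl; rewrite -normrN; apply: ler_norm].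
have b1 : c * D2 <= c * `|D2| by apply: ler_wpM2l.
have b2 : - (c * `|D2|) <= c * D2 by rewrite -mulrN; apply: ler_wpM2l.
have b3 : c * `|D2| <= h * `|D2| by apply: ler_wpM2r.
have u1 : X <= (`|D2| + 1) * h by nra.
have u2 : - ((`|D2| + 1) * h) <= X by nra.
rewrite normrM (gtr0_norm h0) expr2 mulrA.
rewrite ler_pM2r //  ler_norml; apply/andP; split => //.
Qed.

Lemma D_add (V : normedModType R) (F : V -> R) x a b :
  (forall y u, derivable F y u) -> continuous (fun y => 'D_b F y) ->
  'D_(a + b) F x = 'D_a F x + 'D_b F x.
Proof.
move=> hd hc.
set Z := 'D_(a + b) F x - 'D_a F x - 'D_b F x.
suff Z0 : Z = 0 by apply/eqP; rewrite -subr_eq0 opprD addrA; apply/eqP.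
apply/eqP; rewrite -normr_le0; apply/ler_addgt0Pr => e e0; rewrite add0r.
have e3 : 0 < e / 3 by rewrite divr_gt0.
have [d1 d10 H1] := @deriv_eps _ _ _ _ (hd x (a + b)) _ e3.
have [d2 d20 H2] := @deriv_eps _ _ _ _ (hd x a) _ e3.
have := hc x; move/cvgrPdist_lt => /(_ _ e3) /nearV_ex [d3 d30 H3].
set k := `|a| + `|b| + 1.
have k0 : 0 < k by rewrite /k ltr_pwDr // addr_ge0.
set m := Num.min (Num.min d1 d2) (d3 / k).
have m0 : 0 < m by rewrite /m !lt_min d10 d20 divr_gt0.
set h := m / 2.
have h0 : 0 < h by rewrite divr_gt0.
have hm : h < m by rewrite /h ltr_pdivrMr // ltr_pMr // ltr1n.
move: hm; rewrite /m !lt_min => /andP[/andP[hd1 hd2] hd3].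
clearbody h.
pose G := fun t : R => F ((x + h *: a) + t *: b).
have dG : forall t : R, is_derive t (1 : R) G ('D_b F (x + h *: a + t *: b)).
  by move=> t; apply: line_derive; apply: hd.
have cont : {within `[0, h], continuous G}%classic.
  by apply: derivable_within_continuous => t _; have := dG t; case.
have [c cI E] := @MVT_segment R G (fun t => 'D_b F (x + h *: a + t *: b)) 0 h (ltW h0)
   (fun t _ => dG t) cont.
have c0 : 0 <= c by rewrite (itvP cI).
have ch : c <= h by rewrite (itvP cI).
have P1 := H1 h; rewrite (gtr0_norm h0) in P1; have {P1} P1 := P1 hd1.
have P2 := H2 h; rewrite (gtr0_norm h0) in P2; have {P2} P2 := P2 hd2.
have yd : `|x - (x + h *: a + c *: b)| < d3.
  rewrite -addrA opprD addrA subrr sub0r normrN.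
  apply: (le_lt_trans (ler_normD _ _)).
  rewrite !normrZ (gtr0_norm h0) (ger0_norm c0).
  have : h * k < d3 by rewrite -ltr_pdivlMr.
  have : c * `|b| <= h * `|b| by apply: ler_wpM2r.
  rewrite /k; nra.
have P3 := H3 _ yd.
move: E; rewrite /G subr0 scale0r addr0 -addrA -scalerDr => E.
set A1 := F (x + h *: (a + b)) - F x - h * 'D_(a + b) F x in P1.
set A2 := F (x + h *: a) - F x - h * 'D_a F x in P2.
set T := 'D_b F x - 'D_b F (x + h *: a + c *: b) in P3.
have EZ : Z * h = - A1 + A2 - h * T.
  rewrite /Z /A1 /A2 /T.
  move: E; set y := F (x + h *: (a + b)); set y0 := F (x + h *: a) => E.
  have -> : y = y0 + 'D_b F (x + h *: a + c *: b) * h by rewrite -E; ring.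
  ring.
have /andP[a11 a12] : - (e / 3 * h) <= A1 <= e / 3 * h by rewrite -ler_norml.
have /andP[a21 a22] : - (e / 3 * h) <= A2 <= e / 3 * h by rewrite -ler_norml.
have /andP[a31 a32] : - (e / 3) < T < e / 3 by rewrite -ltr_norml.
have hZ1 : Z * h <= e * h by rewrite EZ; nra.
have hZ2 : - (e * h) <= Z * h by rewrite EZ; nra.
rewrite ler_norml; apply/andP; split.
  by rewrite -(ler_pM2r h0) mulNr.
by rewrite -(ler_pM2r h0).
Qed.
End H.

Section Comb.
Variables (R : realType) (d q : nat) (c : 'I_q.+1 -> 'rV[int]_d) (M : 'M[R]_q.+1)
  (s eps : 'I_q.+1 -> R) (w : 'I_q.+1 -> R).
Hypothesis hM : M \in unitmx.
Hypothesis heps : eps ord0 = 1.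

Definition Pk (k : 'I_q.+1) : 'M[R]_q.+1 := \matrix_(i, j) (M i k * invmx M k j).
Definition wv : 'cV[R]_q.+1 := \col_i w i.
Local Notation K := (collision s eps).

Fixpoint rep n : seq ('cV[R]_q.+1 * 'rV[R]_d) :=
  if n is n'.+1 then
    [seq (Pk k *m K *m p.1, p.2 + vel R c k) | k <- index_enum 'I_q.+1, p <- rep n']
  else [:: (wv, 0)].

Lemma En_S dx f n : En_w_act dx c M s eps n.+1 w f =
  evolution_act dx c M s eps (En_w_act dx c M s eps n w f).
Proof. by []. Qed.

Lemma rep_ok dx (f : 'rV[R]_d -> R) n i y :
  En_w_act dx c M s eps n w f i y =
  \sum_(p <- rep n) p.1 i 0 * f (y - dx *: p.2).
Proof.
elim: n i y => [|n IH] i y.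
  by rewrite /= big_seq1 /= mxE scaler0 subr0.
rewrite En_S.
have -> : En_w_act dx c M s eps n w f =
   fun l z => (\sum_(p <- rep n) f (z - dx *: p.2) *: p.1) l 0.
  apply/funext => l; apply/funext => z; rewrite IH summxE.
  by apply: eq_bigr => p _; rewrite mxE mulrC.
rewrite /= big_allpairs_dep /evolution_act /transport_act /matrix_act.
apply: eq_bigr => k _.
set u := \sum_(p <- rep n) f (y - dx *: vel R c k - dx *: p.2) *: p.1.
have -> : \sum_(p <- rep n) (Pk k *m K *m p.1) i 0 * f (y - dx *: (p.2 + vel R c k))
   = (Pk k *m (K *m u)) i 0.
  rewrite mulmxA /u mulmx_sumr summxE; apply: eq_bigr => p _.
  rewrite -scalemxAr [in RHS]mxE mulrC; congr (f _ * _).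
  by rewrite scalerDr opprD addrA addrAC.
rewrite mxE big_distrr; apply: eq_bigr => j _ /=.
by rewrite !mxE mulrA.
Qed.

Lemma sumPk : \sum_k Pk k = 1%:M.
Proof.
rewrite -(mulmxV hM); apply/matrixP => i j.
rewrite summxE !mxE; apply: eq_bigr => k _; by rewrite mxE.
Qed.

Lemma rep_sum n : \sum_(p <- rep n) p.1 = K ^+ n *m wv.
Proof.
elim: n => [|n IH]; first by rewrite /= big_seq1 expr0 mul1mx.
rewrite /= big_allpairs_dep /=.
have -> : \sum_k \sum_(p <- rep n) Pk k *m K *m p.1 = \sum_k Pk k *m K *m (K ^+ n *m wv).
  by apply: eq_bigr => k _; rewrite -IH mulmx_sumr.
by rewrite -mulmx_suml -mulmx_suml sumPk mul1mx exprS -mulmxE mulmxA.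
Qed.

Lemma sum_delta (F : 'I_q.+1 -> R) j : \sum_l (j == l)%:R * F l = F j.
Proof.
rewrite (bigD1 j) //= eqxx mul1r big1 ?addr0 // => l /negbTE.
by rewrite eq_sym => ->; rewrite mul0r.
Qed.

Lemma sum_delta0 (F : 'I_q.+1 -> R) : \sum_(l < q.+1) ((l : nat) == 0%N)%:R * F l = F ord0.
Proof.
rewrite (bigD1 ord0) //= mul1r big1 ?addr0 // => l hl.
suff -> : ((l : nat) == 0%N) = false by rewrite mul0r.
by apply/negbTE; move: hl; apply: contra => /eqP h; apply/eqP/val_inj.
Qed.

Lemma Kcol (v : 'cV[R]_q.+1) j : (K *m v) j 0 = v j 0 - s j * (v j 0 - eps j * v ord0 0).
Proof.
rewrite mxE.
under eq_bigr => l _ do rewrite mxE.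
rewrite (eq_bigr (fun l : 'I_q.+1 => (j == l)%:R * v l 0 - s j * ((j == l)%:R * v l 0)
   + (s j * eps j) * (((l : nat) == 0%N)%:R * v l 0))); last by move=> l _; ring.
rewrite big_split /= big_split /= sumrN -!big_distrr /=.
rewrite sum_delta sum_delta0; ring.
Qed.

Lemma Kpow m j : (K ^+ m *m wv) j 0 =
  if j == ord0 then w ord0 else w j + pipoly m (s j) * (eps j * w ord0 - w j).
Proof.
elim: m j => [|m IH] j.
  rewrite expr0 mul1mx mxE /pipoly expr0 subrr mul0r addr0.
  by case: eqP => // ->.
rewrite exprS -mulmxE -mulmxA Kcol !IH eqxx.
case: eqP => [->|_]; first by rewrite heps; ring.
rewrite /pipoly exprS; ring.
Qed.

Lemma K0 (v : 'cV[R]_q.+1) : (K *m v) ord0 0 = v ord0 0.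
Proof. by rewrite Kcol heps mul1r subrr mulr0 subr0. Qed.

Section Lin.
Variable L : 'rV[R]_d -> R.
Hypothesis hL0 : L 0 = 0.
Hypothesis hLD : forall u v, L (u + v) = L u + L v.
Definition GL : 'M[R]_q.+1 := \sum_k L (vel R c k) *: Pk k.

Lemma rep_lin_vec n : \sum_(p <- rep n.+1) L p.2 *: p.1 =
  K *m (\sum_(p <- rep n) L p.2 *: p.1) + GL *m K ^+ n.+1 *m wv.
Proof.
rewrite /= big_allpairs_dep /=.
under eq_bigr => k _ do under eq_bigr => p _ do rewrite hLD scalerDl.
under eq_bigr => k _ do rewrite big_split /=.
rewrite big_split /=; congr (_ + _).
  rewrite -[K in K *m _]mul1mx -sumPk !mulmx_suml; apply: eq_bigr => k _.
  by rewrite mulmx_sumr; apply: eq_bigr => p _; rewrite scalemxAr.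
rewrite /GL exprS -mulmxE !mulmxA !mulmx_suml; apply: eq_bigr => k _.
by rewrite -!scalemxAl -!mulmxA -rep_sum -scaler_sumr mulmxA mulmx_sumr.
Qed.

Lemma rep_lin n : (\sum_(p <- rep n) L p.2 *: p.1) ord0 0 =
  \sum_(l < n) (GL *m K ^+ (n - l) *m wv) ord0 0.
Proof.
elim: n => [|n IH]; first by rewrite /= big_seq1 big_ord0 hL0 scale0r mxE.
rewrite rep_lin_vec mxE K0 IH big_ord_recl subn0 addrC; congr (_ + _).
Qed.
End Lin.
End Comb.


Section Main.
Variable R : realType.
Variable d : nat.

Definition Ob2 (G : R -> R) := exists C δ : R, 0 < δ /\
  forall dx, 0 < dx < δ -> `|G dx| <= C * dx ^+ 2.

Lemma Ob2_sum (T : Type) (sq : seq T) (G : T -> R -> R) :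
  (forall p, Ob2 (G p)) -> Ob2 (fun dx => \sum_(p <- sq) G p dx).
Proof.
move=> HG; elim: sq => [|p sq [C1 [d1 [d10 H1]]]].
  by exists 0, 1; split => // dx _; rewrite big_nil normr0 mul0r.
have [C2 [d2 [d20 H2]]] := HG p.
exists (C2 + C1), (Num.min d2 d1); split; first by rewrite lt_min d20 d10.
move=> dx /andP[dx0]; rewrite lt_min => /andP[dd2 dd1].
rewrite big_cons mulrDl; apply: (le_trans (ler_normD _ _)).
apply: lerD; [apply: H2 | apply: H1]; by rewrite dx0.
Qed.

Lemma Ob2_scale k G : Ob2 G -> Ob2 (fun dx => k * G dx).
Proof.
move=> [C [δ [δ0 H]]]; exists (`|k| * C), δ; split => // dx hdx.
by rewrite normrM -mulrA ler_wpM2l // H.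
Qed.

Lemma Ob2_taylor (F : 'rV[R]_d -> R) (hF : smooth F) x V :
  Ob2 (fun dx => F (x - dx *: V) - F x - dx * 'D_(- V) F x).
Proof.
pose g := fun t : R => F (x + t *: (- V)).
have dg : forall t, is_derive t (1 : R) g ('D_(- V) F (x + t *: (- V))).
  by move=> t; apply: line_derive; apply: (hF [::]).2.
have Eg : (fun t => 'D_1 g t) = (fun t => 'D_(- V) F (x + t *: (- V))).
  by apply/funext => t; rewrite derive_val.
have dg2 : derivable (fun t => 'D_1 g t) 0 1.
  rewrite Eg; have := @line_derive R _ (fun y => 'D_(- V) F y) x (- V) 0.
  by case => //; apply: (hF [:: - V]).2.
have dg1 : forall t : R, derivable g t 1 by move=> t; case: (dg t).
have [C [δ [δ0 H]]] := @taylor1 R g dg1 dg2.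
exists C, δ; split => // dx hdx.
have := H dx hdx; rewrite (derive_val (is_derive := dg 0)) /g scale0r addr0 scalerN.
by rewrite /GRing.scale /=.
Qed.
End Main.

Lemma Dneg (R : realType) (V : normedModType R) (F : V -> R) x v :
  (forall y u, derivable F y u) -> continuous (fun y => 'D_(- v) F y) ->
  'D_(- v) F x = - 'D_v F x.
Proof.
move=> hd hc; have := @D_add R V F x v (- v) hd hc.
rewrite subrr derive0 => h; apply/eqP; rewrite -subr_eq0 opprK addrC -h.
done.
Qed.

Theorem proposition1 (R : realType) (d q : nat) (hd : (0 < d)%N)
  (c : 'I_q.+1 -> 'rV[int]_d) (M : 'M[R]_q.+1) (hM : M \in unitmx)
  (s : 'I_q.+1 -> R) (hs : forall i : 'I_q.+1, i != ord0 -> 0 < s i <= 2)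
  (eps : 'I_q.+1 -> R) (heps : eps ord0 = 1)
  (lambda : R) (hlambda : 0 < lambda)
  (w : 'I_q.+1 -> R) (n : nat) (hn : (0 < n)%N)
  (phi : R -> 'rV[R]_d -> R)
  (hphix : smooth (phi 0))
  (hphit : forall x : 'rV[R]_d, smooth (fun t : R => phi t x))
  (x : 'rV[R]_d) :
  (* left-hand side: (z^n phi)(0,x) = phi(n dx/lambda, x) *)
  (exists C delta : R, 0 < delta /\
     forall dx : R, 0 < dx < delta ->
       `| phi (n%:R * dx / lambda) x
          - (phi 0 x + n%:R * dx / lambda * derive (fun t : R => phi t x) 0 1) |
       <= C * dx ^+ 2)
  /\
  (* right-hand side: ((E^n w)_1 phi(0,.))(x) *)
  (exists C delta : R, 0 < delta /\
     forall dx : R, 0 < dx < delta ->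
       `| En_w_act dx c M s eps n w (phi 0) ord0 x
          - (w ord0 * phi 0 x
             - n%:R * dx *
               (Gop c M ord0 ord0 (phi 0) x * w ord0
                + \sum_(r < q.+1 | r != ord0) Gop c M ord0 r (phi 0) x * w r
                + n%:R^-1 * \sum_(r < q.+1 | r != ord0)
                     Gop c M ord0 r (phi 0) x * (eps r * w ord0 - w r)
                     * \sum_(l < n) pipoly (n - l) (s r))) |
       <= C * dx ^+ 2).
Proof.
have n0 : (0 : R) < n%:R by rewrite ltr0n.
split.
  pose g := fun t : R => phi t x.
  have dg1 : forall t : R, derivable g t 1 by move=> t; apply: (hphit x [::]).2.
  have dg2 : derivable (fun t => 'D_1 g t) 0 1 by apply: (hphit x [:: 1]).2.
  have [C [δ [δ0 H]]] := @taylor1 R g dg1 dg2.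
  set k := n%:R / lambda.
  have k0 : 0 < k by rewrite divr_gt0.
  exists (C * k ^+ 2), (δ / k); split; first by rewrite divr_gt0.
  move=> dx /andP[dx0 dxd].
  have hk : n%:R * dx / lambda = k * dx by rewrite /k mulrAC.
  have := H (k * dx); rewrite hk mulr_gt0 //= -ltr_pdivlMl // mulrC dxd => /(_ isT).
  by rewrite /g opprD addrA exprMn mulrA.
set F := phi 0.
have hdF : forall y u, derivable F y u by move=> y u; apply: (hphix [::]).2.
have hcF : forall b, continuous (fun y => 'D_b F y) by move=> b; apply: (hphix [:: b]).1.
pose L := fun V : 'rV[R]_d => 'D_(- V) F x.
have hL0 : L 0 = 0 by rewrite /L oppr0 derive0.
have hLD : forall u v, L (u + v) = L u + L v.
  by move=> u v; rewrite /L opprD; apply: D_add.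
have hLN : forall v, L v = - 'D_v F x by move=> v; apply: Dneg.
set G := fun j => Gop c M ord0 j F x.
set K := collision s eps.
have GL0 : forall j, GL R d q c M L ord0 j = - G j.
  move=> j; rewrite /G /Gop summxE -sumrN; apply: eq_bigr => k _.
  by rewrite !mxE hLN; ring.
pose D := fun r => eps r * w ord0 - w r.
have Ereal : forall m, (GL R d q c M L *m K ^+ m *m wv R q w) ord0 0 =
   - (G ord0 * w ord0 + \sum_(r < q.+1 | r != ord0) G r * (w r + pipoly m (s r) * D r)).
  move=> m; rewrite -mulmxA mxE (bigD1 ord0) //= GL0 Kpow // eqxx opprD mulNr.
  congr (_ + _); rewrite -sumrN; apply: eq_bigr => r hr.
  by rewrite GL0 Kpow // (negbTE hr) mulNr.
have S0 : \sum_(p <- rep R d q c M s eps w n) p.1 ord0 0 = w ord0.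
  by rewrite -summxE rep_sum // Kpow // eqxx.
have S1 : \sum_(p <- rep R d q c M s eps w n) p.1 ord0 0 * L p.2 =
   - (n%:R * (G ord0 * w ord0 + \sum_(r < q.+1 | r != ord0) G r * w r)
      + \sum_(r < q.+1 | r != ord0) G r * D r * \sum_(l < n) pipoly (n - l) (s r)).
  have -> : \sum_(p <- rep R d q c M s eps w n) p.1 ord0 0 * L p.2 =
      (\sum_(p <- rep R d q c M s eps w n) L p.2 *: p.1) ord0 0.
    by rewrite summxE; apply: eq_bigr => p _; rewrite mxE mulrC.
  rewrite rep_lin //.
  under eq_bigr => l _ do rewrite Ereal.
  rewrite sumrN; congr (- _).
  rewrite big_split /= sumr_const card_ord mulr_natl mulrnDl -addrA; congr (_ + _).
  have E2 : forall l : 'I_n, \sum_(r < q.+1 | r != ord0) G r * (w r + pipoly (n - l) (s r) * D r)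
     = \sum_(r < q.+1 | r != ord0) G r * w r
       + \sum_(r < q.+1 | r != ord0) G r * D r * pipoly (n - l) (s r).
    by move=> l; rewrite -big_split; apply: eq_bigr => r _ /=; ring.
  under eq_bigr => l _ do rewrite E2.
  rewrite big_split /= sumr_const card_ord; congr (_ + _).
  rewrite exchange_big /=; apply: eq_bigr => r _.
  by rewrite big_distrr.
have rem : @Ob2 R (fun dx => \sum_(p <- rep R d q c M s eps w n)
                 p.1 ord0 0 * (F (x - dx *: p.2) - F x - dx * L p.2)).
  apply: Ob2_sum => p; apply: Ob2_scale; exact: (@Ob2_taylor R d F hphix).
have [C [δ [δ0 H]]] := rem.
exists C, δ; split => // dx hdx.
have := H dx hdx.
set RHS := (X in `|X| <= _ -> _).
suff -> : RHS = En_w_act dx c M s eps n w (phi 0) ord0 x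
          - (w ord0 * phi 0 x
             - n%:R * dx *
               (Gop c M ord0 ord0 (phi 0) x * w ord0
                + \sum_(r < q.+1 | r != ord0) Gop c M ord0 r (phi 0) x * w r
                + n%:R^-1 * \sum_(r < q.+1 | r != ord0)
                     Gop c M ord0 r (phi 0) x * (eps r * w ord0 - w r)
                     * \sum_(l < n) pipoly (n - l) (s r))) by [].
rewrite /RHS rep_ok.
rewrite (eq_bigr (fun p : 'cV[R]_q.+1 * 'rV[R]_d => p.1 ord0 0 * F (x - dx *: p.2) - p.1 ord0 0 * F x
                   - dx * (p.1 ord0 0 * L p.2))); last by move=> p _; ring.
rewrite !sumrB -big_distrl -big_distrr /= S0 S1 -/F.
rewrite -/(G ord0).
have -> : \sum_(r < q.+1 | r != ord0) Gop c M ord0 r F x * w r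
   = \sum_(r < q.+1 | r != ord0) G r * w r by [].
have -> : \sum_(r < q.+1 | r != ord0) Gop c M ord0 r F x * (eps r * w ord0 - w r)
                     * \sum_(l < n) pipoly (n - l) (s r)
   = \sum_(r < q.+1 | r != ord0) G r * D r * \sum_(l < n) pipoly (n - l) (s r) by [].
field; by rewrite lt0r_neq0.
Qed.
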